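(* Let $\mathcal{S}$ be a temporal feedback graph on $T$ rounds such that every neighborhood $S_t$ is contained in the union of at most $R$ orders of $\mathcal{S}$. Then $\mathsf{UB}(\mathcal{S})\le\sqrt{R}\,\mathsf{LB}(\mathcal{S})$, i.e. $\mathsf{UB}(\mathcal{S})/\mathsf{LB}(\mathcal{S})\le\sqrt{R}$.
   Context: A temporal feedback graph $\mathcal{S}$ is a collection of subsets $S_t\subseteq[T]\setminus\{t\}$, $t\in[T]$. An order is a sequence of rounds $t_1,\dots,t_w$ with $t_u\in S_{t_v}$ for all $u<v$; maximal if no super-sequence is an order; $C_1,\dots,C_N$ are the maximal orders. $\mathsf{UB}(\mathcal{S})$ is the optimal value of: minimize $\sum_{c=1}^N\sqrt{\sum_{t\in C_c}\lambda_{c,t}^2}$ subject to $\sum_c\lambda_{c,t}=1$ for all $t$, $\lambda_{c,t}=0$ if $t\notin C_c$, $\lambda_{c,t}\ge0$ (equivalently, the optimal value of: maximize $\sum_t\mu_t$ s.t. $\sum_{t\in C_c}\mu_t^2\le1$ for all $c$, $\mu\ge0$). $\mathsf{LB}(\mathcal{S})$ is the optimal value (supremum) of the lower bound program: maximize $\sum_{t=1}^T\varepsilon_t$ subject to $\sum_{t\in S_{t'}}\varepsilon_t^2\le1$ for all $t'\in[T]$ and $\varepsilon_t\ge0$. *)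

(* Defs.v *)
From mathcomp Require Import all_boot all_order all_algebra.
From mathcomp Require Import all_classical all_reals.
From mathcomp Require Import ereal.
Set Implicit Arguments. Unset Strict Implicit. Unset Printing Implicit Defensive.
Import Order.TTheory GRing.Theory Num.Theory.
Local Open Scope ring_scope.
Local Open Scope classical_set_scope.

(* Rounds [T] = {1,..,T} are represented by 'I_T = {0,..,T-1}.
   A temporal feedback graph is S : 'I_T -> {set 'I_T} with t \notin S t. *)
Definition temporal_feedback_graph (T : nat) (S : 'I_T -> {set 'I_T}) : Prop :=
  forall t, t \notin S t.

Definition is_order (T : nat) (S : 'I_T -> {set 'I_T}) (s : seq 'I_T) : bool :=
  pairwise (fun a b => a \in S b) s.

Definition is_maximal_order (T : nat) (S : 'I_T -> {set 'I_T}) (s : seq 'I_T)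
  : Prop :=
  is_order S s /\ forall s', is_order S s' -> subseq s s' -> s' = s.

Definition UB_feasible (K : realType) (T : nat) (S : 'I_T -> {set 'I_T})
  (mu : 'I_T -> K) : Prop :=
  (forall t, 0 <= mu t) /\
  (forall C, is_maximal_order S C -> \sum_(t <- C) mu t ^+ 2 <= 1).

Definition UB (K : realType) (T : nat) (S : 'I_T -> {set 'I_T}) : \bar K :=
  ereal_sup [set (\sum_t mu t)%:E | mu in UB_feasible S].

Definition LB_feasible (K : realType) (T : nat) (S : 'I_T -> {set 'I_T})
  (eps : 'I_T -> K) : Prop :=
  (forall t, 0 <= eps t) /\
  (forall t', \sum_(t in S t') eps t ^+ 2 <= 1).

Definition LB (K : realType) (T : nat) (S : 'I_T -> {set 'I_T}) : \bar K :=
  ereal_sup [set (\sum_t eps t)%:E | eps in LB_feasible S].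

(* Main.v *)
Require Import Defs.
From mathcomp Require Import all_boot all_order all_algebra.
From mathcomp Require Import all_classical all_reals.
From mathcomp Require Import ereal.
From mathcomp Require Import zify.
From Stdlib Require Import Classical.
Import Order.TTheory GRing.Theory Num.Theory.
Local Open Scope ring_scope.

Lemma sum_count_le (K : realType) (I : eqType) (F : I -> K) (s s' : seq I) :
  (forall i, 0 <= F i) ->
  (forall i, (count_mem i s <= count_mem i s')%N) ->
  \sum_(i <- s) F i <= \sum_(i <- s') F i.
Proof.
move=> F0; elim: s s' => [|x s IH] s' hc.
  by rewrite big_nil; apply: sumr_ge0 => i _.
have xs' : x \in s'.
  by rewrite -has_pred1 has_count; apply: leq_trans (hc x); rewrite /= eqxx.
rewrite (perm_big _ (perm_to_rem xs')) !big_cons lerD2l; apply: IH => i.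
rewrite count_mem_rem; have := hc i; rewrite /=.
by case: (x == i) => /=; lia.
Qed.

Section Main.
Variables (T : nat) (S : 'I_T -> {set 'I_T}).
Hypothesis HS : temporal_feedback_graph S.

Lemma order_uniq s : is_order S s -> uniq s.
Proof. by apply: pairwise_uniq => x; apply/negbTE/HS. Qed.

Lemma order_size s : is_order S s -> (size s <= T)%N.
Proof.
move=> /order_uniq us; rewrite -(card_uniqP us).
by apply: leq_trans (max_card _) _; rewrite card_ord.
Qed.

Lemma ext_max n s : (T.+1 - size s <= n)%N -> is_order S s ->
  exists C, is_maximal_order S C /\ subseq s C.
Proof.
elim: n s => [|n IH] s hn os.
  by exfalso; have := @order_size s os; lia.
have [m|nm] := classic (is_maximal_order S s).
  exists s; split; [exact: m | exact: subseq_refl].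
have [s' [os' ss' ne]] : exists s', [/\ is_order S s', subseq s s' & s' <> s].
  apply: NNPP => hn'; apply: nm; split => // s' os' ss'.
  by apply: NNPP => ne; apply: hn'; exists s'.
have lt : (size s < size s')%N.
  have [le eq] := size_subseq_leqif ss'.
  rewrite ltn_neqAle le andbT eq; apply/eqP => e; apply: ne; by rewrite e.
have [C [mC sC]] := IH s' ltac:(lia) os'.
by exists C; split => //; apply: subseq_trans sC.
Qed.
End Main.

Theorem theorem8 (K : realType) (T : nat) (S : 'I_T -> {set 'I_T}) (R : nat) :
  temporal_feedback_graph S ->
  (0 < R)%N ->
  (forall t : 'I_T, exists Cs : seq (seq 'I_T),
      (size Cs <= R)%N /\ all (is_order S) Cs /\
      {subset S t <= flatten Cs}) ->
  (UB K S <= (Num.sqrt (R%:R : K))%:E * LB K S)%E.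
Proof.
move=> HS R0 Hcov.
apply/ereal_supP => _ [mu [mu0 muC] <-].
set r := Num.sqrt (R%:R : K).
have r0 : 0 < r by rewrite sqrtr_gt0 ltr0n.
pose eps t := mu t / r.
have sq0 : forall t, 0 <= mu t ^+ 2 by move=> t; exact: sqr_ge0.
have epsF : LB_feasible S eps.
  split; first by move=> t; rewrite /eps divr_ge0 // ltW.
  move=> t'; have [Cs [szCs [oCs cov]]] := Hcov t'.
  have -> : \sum_(t in S t') eps t ^+ 2 = (\sum_(t in S t') mu t ^+ 2) / r ^+ 2.
    by rewrite mulr_suml; apply: eq_bigr => t _; rewrite /eps expr_div_n.
  rewrite sqr_sqrtr ?ler0n // ler_pdivrMr ?ltr0n // mul1r.
  rewrite -big_enum.
  apply: (le_trans (@sum_count_le K _ _ _ (flatten Cs) sq0 _)).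
    move=> i; rewrite count_uniq_mem ?enum_uniq //.
    case: (boolP (i \in enum (S t'))) => // /[!mem_enum] /cov.
    by rewrite -has_pred1 has_count.
  rewrite big_flatten /=.
  apply: (le_trans (y := \sum_(c <- Cs) (1 : K))).
    rewrite big_seq [X in _ <= X]big_seq; apply: ler_sum => c cCs.
    have oc : is_order S c by move/allP: oCs; apply.
    have [C [mC sC]] := @ext_max T S HS T.+1 c ltac:(lia) oc.
    apply: le_trans (muC C mC).
    apply: sum_count_le => // i; exact: leq_count_subseq.
  by rewrite big_const_seq count_predT iter_addr_0 ler_nat.
have -> : \sum_t mu t = r * \sum_t eps t.
  rewrite mulr_sumr; apply: eq_bigr => t _; rewrite /eps mulrC divfK //.
  by rewrite gt_eqF.
rewrite EFinM; apply: lee_wpmul2l; first by rewrite lee_fin ltW.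
by apply: ereal_sup_ubound; exists eps.
Qed.
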